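(* Let $g:(0,\infty)\times[0,\infty)\to\mathbb{R}$ be non-decreasing in the second variable, and assume that for some $t_0$, $S=\sup_{t>t_0,\,h,k>0}|g(t,h+k)-g(t+h,k)-g(t,h)|<\infty$. Then: (i) the quantities $\limsup_{t\to\infty}\frac{g(t,h)}{h}$ and $\liminf_{t\to\infty}\frac{g(t,h)}{h}$ have limits as $h\to\infty$; (ii) $\displaystyle\lim_{t\to\infty}\limsup_{h\to\infty}\frac{g(t,h)}{h}\le\lim_{h\to\infty}\limsup_{t\to\infty}\frac{g(t,h)}{h}$ and $\displaystyle\lim_{t\to\infty}\liminf_{h\to\infty}\frac{g(t,h)}{h}\ge\lim_{h\to\infty}\liminf_{t\to\infty}\frac{g(t,h)}{h}$; (iii) $\lim_{h\to\infty}\limsup_{t\to\infty}\frac{g(t,h)}{h}$ is infinite if and only if $\limsup_{t\to\infty}g(t,h)$ is infinite for one (equivalently, for every) $h>0$. *)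

(* Defs.v *)
From HB Require Import structures.
From mathcomp Require Import all_boot all_order all_algebra.
From mathcomp Require Import all_classical all_reals all_analysis.
Set Implicit Arguments. Unset Strict Implicit. Unset Printing Implicit Defensive.
Import Order.TTheory GRing.Theory Num.Theory.
Local Open Scope ring_scope.
Local Open Scope ereal_scope.

Definition limsup_t_ratio (R : realType) (g : R -> R -> R) (h : R) : \bar R :=
  @limf_esup R R^o R (fun t : R => (g t h / h)%:E) (pinfty_nbhs R).
Definition liminf_t_ratio (R : realType) (g : R -> R -> R) (h : R) : \bar R :=
  @limf_einf R R^o R (fun t : R => (g t h / h)%:E) (pinfty_nbhs R).
Definition limsup_h_ratio (R : realType) (g : R -> R -> R) (t : R) : \bar R :=
  @limf_esup R R^o R (fun h : R => (g t h / h)%:E) (pinfty_nbhs R).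
Definition liminf_h_ratio (R : realType) (g : R -> R -> R) (t : R) : \bar R :=
  @limf_einf R R^o R (fun h : R => (g t h / h)%:E) (pinfty_nbhs R).
Definition limsup_t (R : realType) (g : R -> R -> R) (h : R) : \bar R :=
  @limf_esup R R^o R (fun t : R => (g t h)%:E) (pinfty_nbhs R).

(* Main.v *)
Require Import Defs.
From HB Require Import structures.
From mathcomp Require Import all_boot all_order all_algebra.
From mathcomp Require Import all_classical all_reals all_analysis.
From mathcomp Require Import ring lra.
Import Order.TTheory GRing.Theory Num.Theory.
Local Open Scope classical_set_scope.
Local Open Scope ring_scope.
Local Open Scope ereal_scope.
Section Aux.
Context {R : realType}.
Notation F := (pinfty_nbhs R).
Implicit Types f : R -> \bar R.

Definition LS f := @limf_esup R R^o R f F.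
Definition LI f := @limf_einf R R^o R f F.

Lemma LS_le f (e : \bar R) : (\forall x \near F, f x <= e) -> LS f <= e.
Proof.
move=> Fe; rewrite /LS limf_esupE; apply: ge_ereal_inf.
exists (ereal_sup (f @` [set x | f x <= e])); first by exists [set x | f x <= e].
by apply: ge_ereal_sup => _ [x + <-].
Qed.

Lemma LS_lt {f} {c : \bar R} : LS f < c -> \forall x \near F, f x < c.
Proof.
rewrite /LS limf_esupE => /ereal_inf_lt[_ [V FV <-]] Vc.
apply: filterS FV => x Vx; apply: le_lt_trans Vc.
by apply: ereal_sup_ubound; exists x.
Qed.

Lemma LS_ge f (e : \bar R) : (\forall x \near F, e <= f x) -> e <= LS f.
Proof.
move=> Fe; rewrite /LS limf_esupE; apply: le_ereal_inf_tmp => _ [V FV <-].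
have [x [Vx ex]] := filter_ex (filterI FV Fe).
by apply: le_ereal_sup_tmp; exists (f x) => //; exists x.
Qed.

Lemma LI_ge f (e : \bar R) : (\forall x \near F, e <= f x) -> e <= LI f.
Proof.
move=> Fe; rewrite /LI /limf_einf leeNr; apply: LS_le.
by apply: filterS Fe => x; rewrite leeN2.
Qed.

Lemma LI_gt {f} {c : \bar R} : c < LI f -> \forall x \near F, c < f x.
Proof.
rewrite /LI /limf_einf lteNr => /LS_lt; apply: filterS => x /=.
by rewrite lteN2.
Qed.

End Aux.

Lemma cvg_sandwich (R : realType) (T : Type) (F : set_system T) (FF : Filter F)
  (f : T -> \bar R) (l : \bar R) :
  (forall M : R, M%:E < l -> \forall x \near F, M%:E <= f x) ->
  (forall M : R, l < M%:E -> \forall x \near F, f x <= M%:E) -> f @ F --> l.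
Proof.
move=> Hlo Hhi; case: l Hlo Hhi => [r| |] Hlo Hhi.
- apply/fine_cvgP; split.
    have := Hlo (r - 1)%R; rewrite lte_fin ltrBlDr ltrDl ltr01 => /(_ isT) H1.
    have := Hhi (r + 1)%R; rewrite lte_fin ltrDl ltr01 => /(_ isT) H2.
    by apply: filterS2 H1 H2 => x; case: (f x).
  apply/cvgrPdist_lt => e e0.
  have e20 : (0 < e / 2)%R by lra.
  have := Hlo (r - e / 2)%R; rewrite lte_fin ltrBlDr ltrDl e20 => /(_ isT) H1.
  have := Hhi (r + e / 2)%R; rewrite lte_fin ltrDl e20 => /(_ isT) H2.
  apply: filterS2 H1 H2 => x /=; case: (f x) => //= y; rewrite !lee_fin => H1 H2.
  rewrite ltr_norml; apply/andP; split; lra.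
- by apply/cvgeyPge => A; apply: Hlo; rewrite ltry.
- apply/cvgeNyPle => A; exact: (Hhi A (ltNyr _)).
Qed.

Local Open Scope ring_scope.

Section E.
Context {R : realType}.

Lemma dense_lt {e : \bar R} {M : R} : (e < M%:E)%E -> exists M1 : R, (e < M1%:E)%E /\ M1 < M.
Proof.
case: e => [r| |] //.
- rewrite lte_fin => rM; exists ((r + M) / 2); rewrite lte_fin; split; lra.
- by move=> _; exists (M - 1); split; [rewrite ltNyr | lra].
Qed.

Lemma dense_gt {e : \bar R} {M : R} : (M%:E < e)%E -> exists M1 : R, M < M1 /\ (M1%:E < e)%E.
Proof.
case: e => [r| |] //.
- rewrite lte_fin => rM; exists ((r + M) / 2); rewrite lte_fin; split; lra.
- by move=> _; exists (M + 1); split; [lra | rewrite ltry].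
Qed.

Lemma le_of_reals (x y : \bar R) : (forall M : R, (y < M%:E)%E -> (x <= M%:E)%E) -> (x <= y)%E.
Proof.
case: y => [r| |] H.
- apply/lee_addgt0Pr => e e0; apply: H; rewrite lte_fin; lra.
- by rewrite leey.
- case: x H => [r'| |] H //.
  + have := H (r' - 1)%R (ltNyr _); rewrite lee_fin => h; exfalso; lra.
  + by have := H 0%R (ltNyr _).
Qed.

Lemma ge_of_reals (x y : \bar R) : (forall M : R, (M%:E < x)%E -> (M%:E <= y)%E) -> (x <= y)%E.
Proof.
move=> H; rewrite -leeN2; apply: le_of_reals => M MH.
have := H (- M)%R; rewrite EFinN lteNl => /(_ MH).
by rewrite leeNl.
Qed.

Lemma ev_large (D e : R) : 0 < D -> \forall x \near +oo, 0 < x /\ e < D * x.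
Proof.
move=> D0; near=> x; split.
  near: x; apply: nbhs_pinfty_gt; exact: num_real.
rewrite -ltr_pdivrMl //; near: x; apply: nbhs_pinfty_gt; exact: num_real.
Unshelve. all: by end_near.
Qed.

Lemma R1 {x M1 M d y : R} : 0 < x -> M1 < M -> `|d| < (M - M1) * x ->
  y <= M1 * x + d -> y / x < M.
Proof.
move=> x0 MM dx yx; rewrite ltr_pdivrMr //.
have : d <= `|d| by exact: ler_norm.
rewrite mulrBl in dx => dd; lra.
Qed.

Lemma R2 {x M1 M d y : R} : 0 < x -> M < M1 -> `|d| < (M1 - M) * x ->
  M1 * x - d <= y -> M < y / x.
Proof.
move=> x0 MM dx yx; rewrite ltr_pdivlMr //.
have : d <= `|d| by exact: ler_norm.
rewrite mulrBl in dx => dd; lra.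
Qed.

End E.

Definition Hg (R : realType) (g : R -> R -> R) (T1 S : R) : Prop :=
  [/\ 0 <= T1,
      (forall t h h' : R, 0 < t -> 0 <= h -> h <= h' -> g t h <= g t h') &
      (forall t h k : R, T1 < t -> 0 < h -> 0 < k ->
         `| g t (h + k) - g (t + h) k - g t h | <= S)].
Arguments Hg {R}.

Lemma add_le {R : realType} {g : R -> R -> R} {T1 S : R} (H : Hg g T1 S) {t h k : R} :
  T1 < t -> 0 < h -> 0 < k -> g t (h + k) <= g t h + g (t + h) k + S.
Proof.
case: H => _ _ qadd Tt h0 k0; have := qadd t h k Tt h0 k0.
rewrite ler_norml => /andP[_ ?]; lra.
Qed.

Lemma add_ge {R : realType} {g : R -> R -> R} {T1 S : R} (H : Hg g T1 S) {t h k : R} :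
  T1 < t -> 0 < h -> 0 < k -> g t h + g (t + h) k - S <= g t (h + k).
Proof.
case: H => _ _ qadd Tt h0 k0; have := qadd t h k Tt h0 k0.
rewrite ler_norml => /andP[? _]; lra.
Qed.

Lemma S_ge0 {R : realType} {g : R -> R -> R} {T1 S : R} (H : Hg g T1 S) : 0 <= S.
Proof.
case: H => _ _ qadd; apply: le_trans (qadd (T1 + 1) 1 1 _ _ _) => //; lra.
Qed.

Lemma F0 {R : realType} {g : R -> R -> R} {T1 S : R} (H : Hg g T1 S) (s k : R) :
  T1 < s -> 0 < k -> - S <= g s k.
Proof.
move=> Ts k0; have [T1ge0 mono _] := H.
pose u := (T1 + s) / 2.
have Tu : T1 < u by rewrite /u; lra.
have h0 : 0 < s - u by rewrite /u; lra.
clearbody u.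
have := add_le H Tu h0 k0; rewrite [u + _]addrC subrK.
have : g u (s - u) <= g u (s - u + k).
  apply: mono; lra.
lra.
Qed.

Lemma UBn {R : realType} {g : R -> R -> R} {T1 S : R} (H : Hg g T1 S) (h K : R) (n : nat) :
  0 < h -> forall s, T1 < s ->
  (forall s', s <= s' -> g s' h <= K) -> g s (n.+1%:R * h) <= n.+1%:R * (K + S) - S.
Proof.
move=> h0; elim: n => [|n IH] s Ts Hs.
  rewrite !mul1r; have := Hs s (lexx s); lra.
have -> : n.+2%:R = n.+1%:R + 1 :> R by rewrite mulrSr.
have hn : 0 < n.+1%:R * h by rewrite mulr_gt0.
have Tsh : T1 < s + h by lra.
have := IH (s + h) Tsh (fun s' hs' => Hs s' ltac:(lra)).
have := add_le H Ts h0 hn.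
have := Hs s (lexx s).
rewrite mulrDl mul1r addrC.
rewrite mulrDl mul1r; lra.
Qed.

Lemma LBn {R : realType} {g : R -> R -> R} {T1 S : R} (H : Hg g T1 S) (h K : R) (n : nat) :
  0 < h -> forall s, T1 < s ->
  (forall s', s <= s' -> K <= g s' h) -> n.+1%:R * (K - S) + S <= g s (n.+1%:R * h).
Proof.
move=> h0; elim: n => [|n IH] s Ts Hs.
  rewrite !mul1r; have := Hs s (lexx s); lra.
have -> : n.+2%:R = n.+1%:R + 1 :> R by rewrite mulrSr.
have hn : 0 < n.+1%:R * h by rewrite mulr_gt0.
have Tsh : T1 < s + h by lra.
have := IH (s + h) Tsh (fun s' hs' => Hs s' ltac:(lra)).
have := add_ge H Ts h0 hn.
have := Hs s (lexx s).
rewrite !mulrDl !mul1r [n.+1%:R * h + h]addrC; lra.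
Qed.

Lemma UBx {R : realType} {g : R -> R -> R} {T1 S : R} (H : Hg g T1 S) (h K s x : R) :
  0 < h -> T1 < s -> (forall s', s <= s' -> g s' h <= K) -> 0 < x ->
  g s x <= (K + S) * (x / h) + `|K + S|.
Proof.
move=> h0 Ts Hs x0; have [T1ge0 mono _] := H; have S0 := S_ge0 H.
have q0 : 0 <= x / h by rewrite divr_ge0 // ltW.
have /andP[nle ltn] := truncn_itv q0.
set n := Num.truncn (x / h) in nle ltn.
have xle : x <= n.+1%:R * h by rewrite -ler_pdivrMr // ltW.
have := UBn H h K n h0 s Ts Hs.
have : g s x <= g s (n.+1%:R * h) by apply: mono => //; lra.
have := ler_norm (K + S); have := normr_ge0 (K + S).
move: nle ltn.
set q := x / h; set N := n.+1%:R; set A := `|K + S|.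
have -> : N = (n%:R + 1) by rewrite /N mulrSr.
move=> nle ltn A0 KA g1 g2.
have P1 : 0 <= (1 - (n%:R + 1 - q)) * A by apply: mulr_ge0 => //; lra.
have P2 : 0 <= (n%:R + 1 - q) * (A - (K + S)) by apply: mulr_ge0; lra.
nra.
Qed.

Lemma LBx {R : realType} {g : R -> R -> R} {T1 S : R} (H : Hg g T1 S) (h K s x : R) :
  0 < h -> T1 < s -> (forall s', s <= s' -> K <= g s' h) -> h <= x ->
  (K - S) * (x / h) - `|K - S| <= g s x.
Proof.
move=> h0 Ts Hs hx; have [T1ge0 mono _] := H; have S0 := S_ge0 H.
have q1 : 1 <= x / h by rewrite ler_pdivlMr // mul1r.
have q0 : 0 <= x / h by lra.
have /andP[nle ltn] := truncn_itv q0.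
move: nle ltn; case En: (Num.truncn (x / h)) => [|m] nle ltn.
  by exfalso; move: ltn; lra.
have xle : m.+1%:R * h <= x by rewrite -ler_pdivlMr.
have := LBn H h K m h0 s Ts Hs.
have : g s (m.+1%:R * h) <= g s x.
  apply: mono => //; [lra | by rewrite mulr_ge0 // ltW].
have := ler_norm (K - S); have := normr_ge0 (K - S).
move: nle ltn.
set q := x / h; set A := `|K - S|.
have -> : m.+2%:R = (m.+1%:R + 1) :> R by rewrite mulrSr.
set N := m.+1%:R.
move=> nle ltn A0 KA g1 g2.
have P1 : 0 <= (1 - (q - N)) * A by apply: mulr_ge0 => //; lra.
have P2 : 0 <= (q - N) * (A - (K - S)) by apply: mulr_ge0; lra.
nra.
Qed.


Definition lsupv {R : realType} (g : R -> R -> R) (S : R) : \bar R :=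
  ereal_inf [set (limsup_t_ratio g h + (S / h)%:E)%E | h in [set h : R | 0 < h]].
Definition linfv {R : realType} (g : R -> R -> R) (S : R) : \bar R :=
  ereal_sup [set (liminf_t_ratio g h - (S / h)%:E)%E | h in [set h : R | 0 < h]].

Lemma UB_lsup {R : realType} {g : R -> R -> R} {T1 S : R} (H : Hg g T1 S) {M : R} :
  (lsupv g S < M%:E)%E -> exists M1 d T2, M1 < M /\
    forall s x, T2 < s -> 0 < x -> g s x <= M1 * x + d.
Proof.
move=> /ereal_inf_lt [_ [h h0 <-]] hlt.
have [M1 [hM1 M1M]] := dense_lt hlt.
set c := M1 - S / h.
have ac : (limsup_t_ratio g h < c%:E)%E.
  move: hM1; rewrite /c; case: (limsup_t_ratio g h) => [r| |] //=.
  - rewrite -EFinD !lte_fin => ?; lra.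
  - by move=> _; exact: ltNyr.
have := LS_lt ac; case=> T2 [_ HT2].
exists M1, `|c * h + S|, (Num.max T1 T2); split => // s x; rewrite gt_max => /andP[T1s T2s] x0.
have hyp : forall s', s <= s' -> g s' h <= c * h.
  move=> s' ss'; have := HT2 s' (lt_le_trans T2s ss'); rewrite lte_fin ltr_pdivrMr //.
  exact: ltW.
have := UBx H h (c * h) s x h0 T1s hyp x0.
have -> // : (c * h + S) * (x / h) = M1 * x.
rewrite /c; field; by rewrite gt_eqF.
Qed.

Lemma LB_linf {R : realType} {g : R -> R -> R} {T1 S : R} (H : Hg g T1 S) {M : R} :
  (M%:E < linfv g S)%E -> exists M1 d T2 X0, M < M1 /\
    forall s x, T2 < s -> X0 <= x -> M1 * x - d <= g s x.
Proof.
move=> /ereal_sup_gt [_ [h h0 <-]] hlt.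
have [M1 [MM1 hM1]] := dense_gt hlt.
set c := M1 + S / h.
have ac : (c%:E < liminf_t_ratio g h)%E.
  move: hM1; rewrite /c; case: (liminf_t_ratio g h) => [r| |] //=.
  - rewrite -EFinB !lte_fin => ?; lra.
  - by move=> _; exact: ltry.
have := LI_gt ac; case=> T2 [_ HT2].
exists M1, `|c * h - S|, (Num.max T1 T2), h; split => // s x; rewrite gt_max => /andP[T1s T2s] hx.
have hyp : forall s', s <= s' -> c * h <= g s' h.
  move=> s' ss'; have := HT2 s' (lt_le_trans T2s ss'); rewrite lte_fin ltr_pdivlMr //.
  exact: ltW.
have := LBx H h (c * h) s x h0 T1s hyp hx.
have -> // : (c * h - S) * (x / h) = M1 * x.
rewrite /c; field; by rewrite gt_eqF.
Qed.

Lemma cvg_lsup {R : realType} {g : R -> R -> R} {T1 S : R} (H : Hg g T1 S) :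
  (fun h => limsup_t_ratio g h) @ pinfty_nbhs R --> lsupv g S.
Proof.
apply: cvg_sandwich => M Ml.
- have [M' [MM' M'l]] := dense_gt Ml.
  have := ev_large (M' - M) S ltac:(lra).
  apply: filterS => x [x0 Sx].
  have Sx' : S / x < M' - M by rewrite ltr_pdivrMr.
  have : (lsupv g S <= limsup_t_ratio g x + (S / x)%:E)%E.
    by apply: ereal_inf_lbound; exists x.
  move=> /(lt_le_trans M'l).
  case: (limsup_t_ratio g x) => [r| |] /=.
  + rewrite -EFinD !lte_fin lee_fin => ?; lra.
  + by rewrite leey.
  + by rewrite addNye.
- have [M1 [d [T2 [M1M Hb]]]] := UB_lsup H Ml.
  have := ev_large (M - M1) `|d| ltac:(lra).
  apply: filterS => x [x0 dx].
  apply: LS_le; exists T2; split; first exact: num_real.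
  move=> t T2t; rewrite lee_fin; apply/ltW.
  apply: (R1 x0 M1M dx); exact: Hb.
Qed.

Lemma cvg_linf {R : realType} {g : R -> R -> R} {T1 S : R} (H : Hg g T1 S) :
  (fun h => liminf_t_ratio g h) @ pinfty_nbhs R --> linfv g S.
Proof.
apply: cvg_sandwich => M Ml.
- have [M1 [d [T2 [X0 [MM1 Hb]]]]] := LB_linf H Ml.
  have := ev_large (M1 - M) `|d| ltac:(lra).
  move=> Hev; have Hge := nbhs_pinfty_ge (num_real X0).
  apply: filterS2 Hev Hge => x [x0 dx] Xx.
  apply: LI_ge; exists T2; split; first exact: num_real.
  move=> t T2t; rewrite lee_fin; apply/ltW.
  exact: (R2 x0 MM1 dx (Hb t x T2t Xx)).
- have [M' [lM' M'M]] := dense_lt Ml.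
  have := ev_large (M - M') S ltac:(lra).
  apply: filterS => x [x0 Sx].
  have Sx' : S / x < M - M' by rewrite ltr_pdivrMr.
  have : (liminf_t_ratio g x - (S / x)%:E <= linfv g S)%E.
    by apply: ereal_sup_ubound; exists x.
  move=> /le_lt_trans /(_ lM').
  case: (liminf_t_ratio g x) => [r| |] /=.
  + rewrite -EFinB !lte_fin lee_fin => ?; lra.
  + by [].
  + by rewrite leNye.
Qed.

Lemma Cconst_d {R : realType} {g : R -> R -> R} {T1 S : R} (H : Hg g T1 S) (t d : R) :
  T1 < t -> 0 < d -> limsup_h_ratio g (t + d) = limsup_h_ratio g t.
Proof.
move=> Tt d0; have [T1ge0 mono _] := H.
apply/eqP; rewrite eq_le; apply/andP; split.
- apply: le_of_reals => M CM.
  have [M1 [CM1 M1M]] := dense_lt CM.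
  have := LS_lt CM1; case=> T2 [_ HT2].
  apply: LS_le.
  have Hev := ev_large (M - M1) `|M1 * d - g t d + S| ltac:(lra).
  have Hgt := nbhs_pinfty_gt (num_real T2).
  apply: filterS2 Hev Hgt => k [k0 Ek] T2k.
  rewrite lee_fin; apply/ltW; apply: (R1 k0 M1M Ek).
  have := add_ge H Tt d0 k0.
  have := HT2 (d + k) ltac:(lra); rewrite lte_fin ltr_pdivrMr; last by lra.
  rewrite mulrDr; lra.
- apply: le_of_reals => M CM.
  have [M1 [CM1 M1M]] := dense_lt CM.
  have := LS_lt CM1; case=> T2 [_ HT2].
  apply: LS_le.
  have Hev := ev_large (M - M1) `|g t d + S| ltac:(lra).
  have Hgt := nbhs_pinfty_gt (num_real T2).
  apply: filterS2 Hev Hgt => k [k0 Ek] T2k.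
  rewrite lee_fin; apply/ltW; apply: (R1 k0 M1M Ek).
  have := add_le H Tt d0 k0.
  have : g t k <= g t (d + k) by apply: mono; lra.
  have := HT2 k T2k; rewrite lte_fin ltr_pdivrMr //.
  lra.
Qed.

Lemma Dconst_d {R : realType} {g : R -> R -> R} {T1 S : R} (H : Hg g T1 S) (t d : R) :
  T1 < t -> 0 < d -> liminf_h_ratio g (t + d) = liminf_h_ratio g t.
Proof.
move=> Tt d0; have [T1ge0 mono _] := H.
apply/eqP; rewrite eq_le; apply/andP; split.
- apply: ge_of_reals => M MD.
  have [M1 [MM1 M1D]] := dense_gt MD.
  have := LI_gt M1D; case=> T2 [_ HT2].
  apply: LI_ge.
  have Hev := ev_large (M1 - M) `|M1 * d - g t d + S| ltac:(lra).
  have Hgt := nbhs_pinfty_gt (num_real (Num.max T2 0 + d)).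
  apply: filterS2 Hev Hgt => k [k0 Ek] T2k.
  have kd0 : 0 < k - d by move: T2k; rewrite -ltrBrDr gt_max => /andP[_ ->].
  have kdT : T2 < k - d by move: T2k; rewrite -ltrBrDr gt_max => /andP[-> _].
  rewrite lee_fin; apply/ltW; apply: (R2 k0 MM1 Ek).
  have := add_ge H Tt d0 kd0.
  rewrite [d + (k - d)]addrC subrK.
  have := HT2 (k - d) kdT; rewrite lte_fin ltr_pdivlMr //.
  rewrite mulrBr; lra.
- apply: ge_of_reals => M MD.
  have [M1 [MM1 M1D]] := dense_gt MD.
  have := LI_gt M1D; case=> T2 [_ HT2].
  apply: LI_ge.
  have Hev := ev_large (M1 - M) `|g t d + S - M1 * d| ltac:(lra).
  have Hgt := nbhs_pinfty_gt (num_real T2).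
  apply: filterS2 Hev Hgt => k [k0 Ek] T2k.
  rewrite lee_fin; apply/ltW; apply: (R2 k0 MM1 Ek).
  have := add_le H Tt d0 k0.
  have := HT2 (d + k) ltac:(lra); rewrite lte_fin ltr_pdivlMr; last by lra.
  rewrite mulrDr; lra.
Qed.

Lemma Cconst {R : realType} {g : R -> R -> R} {T1 S : R} (H : Hg g T1 S) (t t' : R) :
  T1 < t -> t < t' -> limsup_h_ratio g t' = limsup_h_ratio g t.
Proof.
move=> Tt tt'; have -> : t' = t + (t' - t) by rewrite addrC subrK.
by apply: (Cconst_d H) => //; lra.
Qed.

Lemma Dconst {R : realType} {g : R -> R -> R} {T1 S : R} (H : Hg g T1 S) (t t' : R) :
  T1 < t -> t < t' -> liminf_h_ratio g t' = liminf_h_ratio g t.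
Proof.
move=> Tt tt'; have -> : t' = t + (t' - t) by rewrite addrC subrK.
by apply: (Dconst_d H) => //; lra.
Qed.

Lemma l1_cvg {R : realType} {g : R -> R -> R} {T1 S : R} (H : Hg g T1 S) :
  (fun t => limsup_h_ratio g t) @ pinfty_nbhs R --> limsup_h_ratio g (T1 + 1).
Proof.
apply: cvg_near_cst; exists (T1 + 1); split; first exact: num_real.
by move=> t tT; apply: Cconst H _ _ _ tT; lra.
Qed.

Lemma l2_cvg {R : realType} {g : R -> R -> R} {T1 S : R} (H : Hg g T1 S) :
  (fun t => liminf_h_ratio g t) @ pinfty_nbhs R --> liminf_h_ratio g (T1 + 1).
Proof.
apply: cvg_near_cst; exists (T1 + 1); split; first exact: num_real.
by move=> t tT; apply: Dconst H _ _ _ tT; lra.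
Qed.

Lemma l1_le {R : realType} {g : R -> R -> R} {T1 S : R} (H : Hg g T1 S) :
  (limsup_h_ratio g (T1 + 1) <= lsupv g S)%E.
Proof.
apply: le_of_reals => M lM.
have [M1 [d [T2 [M1M Hb]]]] := UB_lsup H lM.
have h1 : T1 <= Num.max T1 T2 by rewrite le_max lexx.
have h2 : T2 <= Num.max T1 T2 by rewrite le_max lexx orbT.
rewrite -(Cconst H (T1 + 1) (Num.max T1 T2 + 2)); [|lra|lra].
apply: LS_le.
have Hev := ev_large (M - M1) `|d| ltac:(lra).
apply: filterS Hev => x [x0 dx].
rewrite lee_fin; apply/ltW; apply: (R1 x0 M1M dx).
by apply: Hb => //; lra.
Qed.

Lemma l2_ge {R : realType} {g : R -> R -> R} {T1 S : R} (H : Hg g T1 S) :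
  (linfv g S <= liminf_h_ratio g (T1 + 1))%E.
Proof.
apply: ge_of_reals => M Ml.
have [M1 [d [T2 [X0 [MM1 Hb]]]]] := LB_linf H Ml.
have h1 : T1 <= Num.max T1 T2 by rewrite le_max lexx.
have h2 : T2 <= Num.max T1 T2 by rewrite le_max lexx orbT.
rewrite -(Dconst H (T1 + 1) (Num.max T1 T2 + 2)); [|lra|lra].
apply: LI_ge.
have Hev := ev_large (M1 - M) `|d| ltac:(lra).
have Hge := nbhs_pinfty_ge (num_real X0).
apply: filterS2 Hev Hge => x [x0 dx] Xx.
rewrite lee_fin; apply/ltW; apply: (R2 x0 MM1 dx).
by apply: Hb => //; lra.
Qed.

Definition Pb {R : realType} (g : R -> R -> R) (h : R) : Prop :=
  exists c T : R, forall t, T < t -> g t h < c.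

Lemma lim_fin {R : realType} {g : R -> R -> R} {T1 S : R} (H : Hg g T1 S) (h : R) :
  0 < h -> (limsup_t g h \is a fin_num) <-> Pb g h.
Proof.
move=> h0.
have lb : ((- S)%:E <= limsup_t g h)%E.
  apply: LS_ge; exists T1; split; first exact: num_real.
  by move=> t Tt; rewrite lee_fin; apply: (F0 H).
split.
- move=> fin.
  have : (limsup_t g h < (fine (limsup_t g h) + 1)%:E)%E.
    by rewrite -{1}(fineK fin) lte_fin ltrDl.
  move/LS_lt; case=> T [_ HT]; exists (fine (limsup_t g h) + 1), T.
  by move=> t /HT; rewrite lte_fin.
- case=> c [T HT].
  have ub : (limsup_t g h <= c%:E)%E.
    apply: LS_le; exists T; split; first exact: num_real.
    by move=> t /HT /ltW; rewrite lee_fin.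
  by move: lb ub; case: (limsup_t g h).
Qed.

Lemma a_ge {R : realType} {g : R -> R -> R} {T1 S : R} (H : Hg g T1 S) (h : R) :
  0 < h -> ((- (S / h))%:E <= limsup_t_ratio g h)%E.
Proof.
move=> h0; apply: LS_ge; exists T1; split; first exact: num_real.
move=> t Tt; rewrite lee_fin ler_pdivlMr // mulNr divfK ?gt_eqF //.
exact: (F0 H).
Qed.

Lemma a_le {R : realType} {g : R -> R -> R} {T1 S : R} (H : Hg g T1 S) (h : R) :
  0 < h -> Pb g h -> exists r : R, (limsup_t_ratio g h <= r%:E)%E.
Proof.
move=> h0 [c [T HT]]; exists (c / h); apply: LS_le.
exists T; split; first exact: num_real.
move=> t /HT ?; rewrite lee_fin ler_pdivlMr // divfK ?gt_eqF //; exact: ltW.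
Qed.

Lemma notP_a {R : realType} {g : R -> R -> R} {T1 S : R} (H : Hg g T1 S) (h : R) :
  0 < h -> ~ Pb g h -> limsup_t_ratio g h = +oo%E.
Proof.
move=> h0 nP.
have key : forall r : R, (limsup_t_ratio g h < r%:E)%E -> False.
  move=> r /LS_lt [T [_ HT]]; apply: nP; exists (r * h), T.
  by move=> t /HT; rewrite lte_fin ltr_pdivrMr.
case E: (limsup_t_ratio g h) => [r| |] //.
- by exfalso; apply: (key (r + 1)); rewrite E lte_fin ltrDl.
- by exfalso; apply: (key 0); rewrite E ltNyr.
Qed.

Lemma P_all {R : realType} {g : R -> R -> R} {T1 S : R} (H : Hg g T1 S) (h x : R) :
  0 < h -> 0 < x -> Pb g h -> Pb g x.
Proof.
move=> h0 x0 [c [T HT]].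
exists ((c + S) * (x / h) + `|c + S| + 1), (Num.max T1 T).
move=> t; rewrite gt_max => /andP[T1t Tt].
have hyp : forall s', t <= s' -> g s' h <= c.
  by move=> s' ts'; apply/ltW/HT; lra.
have := UBx H h c t x h0 T1t hyp x0; lra.
Qed.

Lemma part3 {R : realType} {g : R -> R -> R} {T1 S : R} (H : Hg g T1 S) :
  ((lsupv g S \isn't a fin_num) <->
       (exists h : R, (0 < h)%R /\ limsup_t g h \isn't a fin_num)) /\
    ((lsupv g S \isn't a fin_num) <->
       (forall h : R, (0 < h)%R -> limsup_t g h \isn't a fin_num)).
Proof.
have [[h0 [h00 nP]]|Hno] := pselect (exists h : R, 0 < h /\ ~ Pb g h).
- have allnP : forall x, 0 < x -> ~ Pb g x.
    by move=> x x0 Px; apply: nP; apply: (P_all H x h0 x0 h00 Px).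
  have nfin : forall x, 0 < x -> limsup_t g x \isn't a fin_num.
    by move=> x x0; apply/negP => /(lim_fin H x x0); apply: allnP.
  have -> : lsupv g S = +oo%E.
    apply/ereal_inf_pinfty => _ [x x0 <-]; rewrite (notP_a H x x0 (allnP x x0)).
    by [].
  split; split => // _; first by exists h0; split => //; apply: nfin.
- have allP : forall h, 0 < h -> Pb g h.
    by move=> h h0; apply: contrapT => nP; apply: Hno; exists h.
  have fin : forall x, 0 < x -> limsup_t g x \is a fin_num.
    by move=> x x0; apply/(lim_fin H x x0)/allP.
  have lsfin : lsupv g S \is a fin_num.
    have [r ar] := a_le H 1 ltr01 (allP 1 ltr01).
    have ub : (lsupv g S <= (r + S / 1)%:E)%E.
      have i1 : (lsupv g S <= limsup_t_ratio g 1 + (S / 1)%:E)%E.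
        by apply: ereal_inf_lbound; exists 1; [rewrite /= ltr01|].
      apply: le_trans i1 _.
      by rewrite EFinD leeD2r.
    have lb : (0%:E <= lsupv g S)%E.
      apply: le_ereal_inf_tmp => _ [x x0 <-].
      have := a_ge H x x0.
      case: (limsup_t_ratio g x) => [y| |] //=.
      + rewrite -EFinD !lee_fin => ?; lra.
      + by move=> _; rewrite addye // leey.
    by move: lb ub; case: (lsupv g S).
  rewrite lsfin /=; split; split => //.
  + by case=> h [h0 /negP []]; apply: fin.
  + by move=> /(_ 1 ltr01) /negP []; apply: fin.
Qed.

Local Open Scope ereal_scope.

Theorem proposition5p2 (R : realType) (g : R -> R -> R) (t0 : R) :
  (* g is non-decreasing in the second variable on (0,oo) x [0,oo) *)
  (forall t h h' : R, (0 < t)%R -> (0 <= h)%R -> (h <= h')%R -> (g t h <= g t h')%R) ->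
  (* S = sup_{t > t0, h, k > 0} |g(t,h+k) - g(t+h,k) - g(t,h)| < oo *)
  (exists S : R, forall t h k : R, (t0 < t)%R -> (0 < t)%R -> (0 < h)%R -> (0 < k)%R ->
      (`| g t (h + k) - g (t + h) k - g t h | <= S)%R) ->
  exists lsup linf : \bar R,
    (* (i) *)
    ((fun h => limsup_t_ratio g h) @ pinfty_nbhs R --> lsup) /\
    ((fun h => liminf_t_ratio g h) @ pinfty_nbhs R --> linf) /\
    (* (ii) *)
    (exists l1 : \bar R,
        ((fun t => limsup_h_ratio g t) @ pinfty_nbhs R --> l1) /\ l1 <= lsup) /\
    (exists l2 : \bar R,
        ((fun t => liminf_h_ratio g t) @ pinfty_nbhs R --> l2) /\ linf <= l2) /\
    (* (iii) *)
    ((lsup \isn't a fin_num) <->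
       (exists h : R, (0 < h)%R /\ limsup_t g h \isn't a fin_num)) /\
    ((lsup \isn't a fin_num) <->
       (forall h : R, (0 < h)%R -> limsup_t g h \isn't a fin_num)).
Proof.
move=> mono [S HS].
have H : Hg g (Num.max t0 0%R) S.
  split.
  - by rewrite le_max lexx orbT.
  - exact: mono.
  - move=> t h k; rewrite gt_max => /andP[t0t tpos] h0 k0.
    exact: HS.
exists (lsupv g S), (linfv g S); split; first exact: cvg_lsup H.
split; first exact: cvg_linf H.
split; first by exists (limsup_h_ratio g (Num.max t0 0%R + 1)); split;
  [exact: l1_cvg H | exact: l1_le H].
split; first by exists (liminf_h_ratio g (Num.max t0 0%R + 1)); split;
  [exact: l2_cvg H | exact: l2_ge H].
exact: part3 H.
Qed.
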